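(* Let $m,r,s,t$ be any integers and $n\ge0$ an integer, and set \[ X=q^mu_{r-s}^2+q^{2m-s}u_{r-m}^2+q^mu_{r-s}u_{r-m}v_{m-s}, \] assumed nonzero. Then \[ \begin{aligned} &\sum_{j=0}^{n}(-1)^jq^{(m-s)j}u_{r-s}^{n-j}u_{r-m}^{j}w_{(s-m)j+mn+t}\\ &=\sum_{j=0}^{n}\frac{u_{m-s}^j}{2^{j+1}}\left(u_{r-s}^{n-j}w_{(r-m)j+mn+t}+(-1)^{n-j}q^{(m-s)(n-j)}u_{r-m}^{n-j}w_{s(n-j)+t+rj}\right)\\ &=\frac{u_{r-s}^{n+2}w_{mn+t}+u_{r-s}^{n+1}u_{r-m}w_{mn+m+t-s}}{u_{r-s}^2+q^{m-s}u_{r-m}^2+u_{r-s}u_{r-m}v_{m-s}} +\frac{(-1)^nu_{r-m}^{n+1}\left(q^{(m-s)(n+1)+m}u_{r-s}w_{sn+s+t-m}+q^{(m-s)(n+2)+s}u_{r-m}w_{sn+t}\right)}{X}. \end{aligned} \]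
   Context: Let $p,q$ be real numbers with $p\neq0$, $q\neq0$ and $p^2-4q>0$; let $a,b$ be complex numbers. Put $\Delta=\sqrt{p^2-4q}>0$, $\tau=(p+\Delta)/2$, $\sigma=(p-\Delta)/2$. The Horadam sequence $w_n=w_n(a,b;p,q)$ is defined by $w_0=a$, $w_1=b$, $w_n=pw_{n-1}-qw_{n-2}$, extended to all integers $n$ via $w_{n-2}=(pw_{n-1}-w_n)/q$; equivalently $w_n=A\tau^n+B\sigma^n$ with $A=(b-a\sigma)/\Delta$, $B=(a\tau-b)/\Delta$. Write $u_n=w_n(0,1;p,q)=(\tau^n-\sigma^n)/\Delta$ and $v_n=w_n(2,p;p,q)=\tau^n+\sigma^n$. *)

(* Defs.v *)
From mathcomp Require Import all_boot all_algebra.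
From mathcomp Require Import complex.
From mathcomp Require Export Rstruct.
Set Implicit Arguments. Unset Strict Implicit. Unset Printing Implicit Defensive.
Import GRing.Theory Num.Theory.
Local Open Scope complex_scope.
Local Open Scope ring_scope.

Notation Rl := Rdefinitions.R.
Notation Cx := (complex Rdefinitions.R).

(* Forward recursion: hfwd k = (w_k, w_{k+1}). *)
Fixpoint hfwd (a b p q : Cx) (k : nat) : Cx * Cx :=
  match k with
  | 0%N => (a, b)
  | k'.+1 => let xy := hfwd a b p q k' in (xy.2, p * xy.2 - q * xy.1)
  end.

(* Backward recursion: hbwd k = (w_{-k}, w_{-k+1}),
   using w_{n-2} = (p w_{n-1} - w_n) / q. *)
Fixpoint hbwd (a b p q : Cx) (k : nat) : Cx * Cx :=
  match k with
  | 0%N => (a, b)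
  | k'.+1 => let xy := hbwd a b p q k' in ((p * xy.1 - xy.2) / q, xy.1)
  end.

Definition horadam (a b : Cx) (p q : Rl) (n : int) : Cx :=
  match n with
  | Posz k => (hfwd a b p%:C q%:C k).1
  | Negz k => (hbwd a b p%:C q%:C k.+1).1
  end.

Definition hu (p q : Rl) (n : int) : Cx := horadam 0 1 p q n.
Definition hv (p q : Rl) (n : int) : Cx := horadam 2 p%:C p q n.

(* Main.v *)
Require Import Defs.
From mathcomp Require Import all_boot all_algebra.
From mathcomp Require Import complex.
From mathcomp Require Import all_order ring.
Import Order.TTheory GRing.Theory Num.Theory.
Local Open Scope complex_scope.
Local Open Scope ring_scope.
Set Implicit Arguments. Unset Strict Implicit. Unset Printing Implicit Defensive.
Definition hsum (F : fieldType) (x y : F) n := \sum_(0 <= j < n.+1) x ^+ (n - j) * y ^+ j.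

Lemma hsumS (F : fieldType) (x y : F) n : hsum x y n.+1 = x * hsum x y n + y ^+ n.+1.
Proof.
rewrite /hsum big_nat_recr //= subnn expr0 mul1r; congr (_ + _).
rewrite mulr_sumr; apply: eq_big_nat => j /andP [_ hj].
by rewrite subSn // exprS mulrA.
Qed.

Lemma hsum_mul (F : fieldType) (x y : F) n : (x - y) * hsum x y n = x ^+ n.+1 - y ^+ n.+1.
Proof.
elim: n => [|n IH]; first by rewrite /hsum big_nat1 !expr0 !expr1; ring.
rewrite hsumS mulrDr mulrCA IH !exprS; ring.
Qed.

Lemma hsum_rec (F : fieldType) (x y d : F) n : (2:F) != 0 -> d = (x + y) / 2 ->
  hsum x y n.+1 = d * hsum x y n + (x ^+ n.+1 + y ^+ n.+1) / 2.
Proof.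
move=> h2 hd; elim: n => [|n IH].
  by rewrite hsumS /hsum big_nat1 !expr0 !expr1 hd; field.
rewrite {1}hsumS {1}IH hsumS hd !exprS. field; done.
Qed.

Lemma geo (F : fieldType) (x y d : F) n : (2:F) != 0 -> d = (x + y) / 2 ->
  \sum_(0 <= j < n.+1) x ^+ (n - j) * y ^+ j =
  \sum_(0 <= j < n.+1) d ^+ j / 2 * (x ^+ (n - j) + y ^+ (n - j)).
Proof.
move=> h2 hd; rewrite -/(hsum x y n); elim: n => [|n IH].
  by rewrite /hsum !big_nat1 !expr0; field.
rewrite (hsum_rec n h2 hd) IH [RHS]big_nat_recl //= subn0 expr0.
rewrite mulr_sumr addrC; congr (_ + _); first by field.
apply: eq_big_nat => j _; rewrite subSS exprS; ring.
Qed.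
Lemma pw (F : unitRingType) (z : F) (k : int) (j : nat) : z ^ (k * j%:Z) = (z ^ k) ^+ j.
Proof. by rewrite exprnP exprz_exp. Qed.

Lemma core1 (F : fieldType) (al be : F) (u : int -> F) (Q : F) (m r s t : int) (n : nat) :
  (2:F) != 0 -> al != 0 -> be != 0 -> al != be ->
  (forall k, u k = (al ^ k - be ^ k) / (al - be)) -> Q = al * be ->
  (\sum_(0 <= j < n.+1)
      (-1) ^+ j * Q ^ ((m - s) * j%:Z) * u (r - s) ^+ (n - j) * u (r - m) ^+ j
        * al ^ ((s - m) * j%:Z + m * n%:Z + t)
   = al ^ (m * n%:Z + t) * hsum (u (r - s)) (- (be ^ (m - s) * u (r - m))) n)
  /\
  (\sum_(0 <= j < n.+1)
      u (m - s) ^+ j / 2 ^+ j.+1 *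
        (u (r - s) ^+ (n - j) * al ^ ((r - m) * j%:Z + m * n%:Z + t)
         + (-1) ^+ (n - j) * Q ^ ((m - s) * (n - j)%:Z) * u (r - m) ^+ (n - j)
             * al ^ (s * (n - j)%:Z + t + r * j%:Z))
   = al ^ (m * n%:Z + t) * hsum (u (r - s)) (- (be ^ (m - s) * u (r - m))) n).
Proof.
move=> h2 ha hb hab hu hQ.
have hQk k : Q ^ k = al ^ k * be ^ k by rewrite hQ expfzMl.
have ainv : al ^ (s - m) = (al ^ (m - s))^-1 by rewrite invr_expz opprB.
have a1n : al ^ (m - s) != 0 by rewrite expfz_neq0.
have hx : u (r - s) = al ^ (r - m) * u (m - s) + be ^ (m - s) * u (r - m).
  rewrite !hu; have -> : r - s = (r - m) + (m - s) by ring.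
  rewrite !expfzDr //; field; by rewrite subr_eq0.
split.
  rewrite /hsum mulr_sumr; apply: eq_big_nat => j _.
  rewrite (pw Q) hQk -addrA (@expfzDr _ al ((s - m) * j%:Z)) // (pw al) ainv (exprNn (be ^ (m - s) * u (r - m))) !exprMn exprVn.
  field; by rewrite expf_neq0.
rewrite /hsum (geo n h2 (erefl ((u (r - s) + - (be ^ (m - s) * u (r - m))) / 2))).
rewrite mulr_sumr; apply: eq_big_nat => j /andP [_ hj].
have hnj : ((n - j)%N : int) = n%:Z - j%:Z by rewrite subzn.
have -> : s * (n - j)%:Z + t + r * j%:Z = (s - m) * (n - j)%:Z + ((r - m) * j%:Z + (m * n%:Z + t)).
  rewrite hnj; ring.
rewrite -[(r - m) * j%:Z + m * n%:Z + t]addrA.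
rewrite (@expfzDr _ al ((s - m) * (n - j)%:Z)) // (@expfzDr _ al ((r - m) * j%:Z)) //.
rewrite (pw Q) !(pw al) hQk ainv.
rewrite hx (exprNn (be ^ (m - s) * u (r - m))) !exprMn !exprVn exprS addrK [(al ^ (r - m) * _) ^+ j]exprMn.
set A1 := (al ^ (m - s)) ^+ (n - j).
have hA1 : A1 != 0 by rewrite expf_neq0.
field. by rewrite h2 hA1 expf_neq0.
Qed.

Lemma core2 (F : fieldType) (al be : F) (u v : int -> F) (Q : F) (m r s t : int) (n : nat) :
  (2:F) != 0 -> al != 0 -> be != 0 -> al != be ->
  (forall k, v k = al ^ k + be ^ k) -> Q = al * be ->
  Q ^ m * u (r - s) ^+ 2 + Q ^ (2 * m - s) * u (r - m) ^+ 2
           + Q ^ m * u (r - s) * u (r - m) * v (m - s) != 0 ->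
  (u (r - s) ^+ n.+2 * al ^ (m * n%:Z + t)
        + u (r - s) ^+ n.+1 * u (r - m) * al ^ (m * n%:Z + m + t - s))
       / (u (r - s) ^+ 2 + Q ^ (m - s) * u (r - m) ^+ 2
          + u (r - s) * u (r - m) * v (m - s))
     + (-1) ^+ n * u (r - m) ^+ n.+1
         * (Q ^ ((m - s) * (n%:Z + 1) + m) * u (r - s) * al ^ (s * n%:Z + s + t - m)
            + Q ^ ((m - s) * (n%:Z + 2) + s) * u (r - m) * al ^ (s * n%:Z + t))
         / (Q ^ m * u (r - s) ^+ 2 + Q ^ (2 * m - s) * u (r - m) ^+ 2
           + Q ^ m * u (r - s) * u (r - m) * v (m - s))
  = al ^ (m * n%:Z + t) * hsum (u (r - s)) (- (be ^ (m - s) * u (r - m))) n.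
Proof.
move=> h2 ha hb hab hv hQ.
have hQk k : Q ^ k = al ^ k * be ^ k by rewrite hQ expfzMl.
have hQ0 : Q != 0 by rewrite hQ mulf_neq0.
have ainv : al ^ (s - m) = (al ^ (m - s))^-1 by rewrite invr_expz opprB.
have a1n : al ^ (m - s) != 0 by rewrite expfz_neq0.
have b1n : be ^ (m - s) != 0 by rewrite expfz_neq0.
have Qsn : Q ^ s != 0 by rewrite expfz_neq0.
set x := u (r - s); set V := u (r - m).
rewrite hv.
have -> : m * n%:Z + m + t - s = (m - s) + (m * n%:Z + t) by ring.
have -> : (m - s) * (n%:Z + 1) + m = (m - s) * (n.+1)%:Z + ((m - s) + s) by rewrite intS; ring.
have -> : s * n%:Z + s + t - m = (s - m) * (n.+1)%:Z + (m * n%:Z + t) by rewrite intS; ring.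
have -> : (m - s) * (n%:Z + 2) + s = (m - s) * (n.+2)%:Z + s by rewrite !intS; ring.
have -> : s * n%:Z + t = (s - m) * n%:Z + (m * n%:Z + t) by ring.
have -> : 2 * m - s = (m - s) + ((m - s) + s) by ring.
have -> : Q ^ m = Q ^ ((m - s) + s) by congr (_ ^ _); ring.
rewrite (expfzDr (m - s) (m - s + s)) // (expfzDr (m - s) (m * n%:Z + t)) //.
rewrite (expfzDr ((m - s) * (n.+1)%:Z)) // (expfzDr ((s - m) * (n.+1)%:Z)) //.
rewrite (expfzDr ((m - s) * (n.+2)%:Z)) // (expfzDr ((s - m) * n%:Z)) //.
rewrite !(expfzDr (m - s) s) //.
rewrite !(pw Q) !(pw al) ainv !(hQk (m - s)).
set a1 := al ^ (m - s); set b1 := be ^ (m - s); set E := al ^ (m * n%:Z + t); set Qs := Q ^ s.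
move=> hX.
have hD : (x + a1 * V) * (x + b1 * V) != 0.
  apply: contraNneq hX => H.
  have -> : a1 * b1 * Qs * x ^+ 2 + a1 * b1 * (a1 * b1 * Qs) * V ^+ 2 + a1 * b1 * Qs * x * V * (a1 + b1)
     = a1 * b1 * Qs * ((x + a1 * V) * (x + b1 * V)) by ring.
  by rewrite H mulr0.
move: hD; rewrite mulf_eq0 negb_or => /andP [hD1 hD2].
have hh : hsum x (- (b1 * V)) n = (x ^+ n.+1 - (- (b1 * V)) ^+ n.+1) / (x + b1 * V).
  rewrite -hsum_mul opprK; field; done.
rewrite hh (exprNn (b1 * V)) !exprMn !exprVn !exprS !expr0 !mulr1.
have -> : x * x + a1 * b1 * (V * V) + x * V * (a1 + b1) = (x + a1 * V) * (x + b1 * V) by ring.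
have -> : a1 * b1 * Qs * (x * x) + a1 * b1 * (a1 * b1 * Qs) * (V * V) + a1 * b1 * Qs * x * V * (a1 + b1)
   = a1 * b1 * Qs * ((x + a1 * V) * (x + b1 * V)) by ring.
have an : a1 ^+ n != 0 by rewrite expf_neq0.
field; by rewrite hD1 hD2 Qsn a1n b1n an.
Qed.
Lemma roots_ex (p q : Rl) : q != 0 -> 0 < p ^+ 2 - 4 * q ->
  exists al be : Cx, [/\ al != 0, be != 0, al != be, al + be = p%:C & al * be = q%:C].
Proof.
move=> hq hd.
set d := Num.sqrt (p ^+ 2 - 4 * q).
have dpos : 0 < d by rewrite sqrtr_gt0.
have d2 : d ^+ 2 = p ^+ 2 - 4 * q by rewrite sqr_sqrtr // ltW.
have hsum : ((p + d) / 2)%:C + ((p - d) / 2)%:C = p%:C :> Cx.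
  by rewrite -rmorphD /=; congr (_ %:C); field.
have hprod : ((p + d) / 2)%:C * ((p - d) / 2)%:C = q%:C :> Cx.
  rewrite -rmorphM /=; congr (_ %:C).
  have -> : (p + d) / 2 * ((p - d) / 2) = (p ^+ 2 - d ^+ 2) / 4 by field.
  by rewrite d2; field.
exists ((p + d) / 2)%:C, ((p - d) / 2)%:C; split => //.
- apply: contra_neq hq => h0; apply: complexI.
  by rewrite -hprod h0 mul0r.
- apply: contra_neq hq => h0; apply: complexI.
  by rewrite -hprod h0 mulr0.
- apply/negP => /eqP /complexI h.
  have : d = (p + d) / 2 - (p - d) / 2 by field.
  rewrite h subrr => h0; move: dpos; by rewrite h0 ltxx.
Qed.

Lemma binet_fwd (a b P Qc al be : Cx) k : al + be = P -> al * be = Qc -> al != be ->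
  hfwd a b P Qc k = ((b - a * be) / (al - be) * al ^+ k + (a * al - b) / (al - be) * be ^+ k,
                     (b - a * be) / (al - be) * al ^+ k.+1 + (a * al - b) / (al - be) * be ^+ k.+1).
Proof.
move=> hP hQ hab; have hab' : al - be != 0 by rewrite subr_eq0.
elim: k => [|k IH] /=.
  by congr (_, _); rewrite ?expr0 ?expr1; field.
rewrite IH /=; congr (_, _); rewrite -hP -hQ !exprS; field. all: done.
Qed.

Lemma binet_bwd (a b P Qc al be : Cx) k : al + be = P -> al * be = Qc -> al != be ->
  al != 0 -> be != 0 ->
  hbwd a b P Qc k = ((b - a * be) / (al - be) * al^-1 ^+ k + (a * al - b) / (al - be) * be^-1 ^+ k,
                     (b - a * be) / (al - be) * al^-1 ^+ k * al + (a * al - b) / (al - be) * be^-1 ^+ k * be).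
Proof.
move=> hP hQ hab ha hb; have hab' : al - be != 0 by rewrite subr_eq0.
elim: k => [|k IH] /=.
  by congr (_, _); rewrite ?expr0; field.
rewrite IH /=; congr (_, _); rewrite -?hP -?hQ !exprS; field.
all: try by rewrite ?ha ?hb ?hab'.
Qed.

Lemma binet (a b : Cx) (p q : Rl) al be k : al + be = p%:C -> al * be = q%:C -> al != be ->
  al != 0 -> be != 0 ->
  horadam a b p q k = (b - a * be) / (al - be) * al ^ k + (a * al - b) / (al - be) * be ^ k.
Proof.
move=> hP hQ hab ha hb; case: k => [k|k].
  by rewrite /horadam (binet_fwd _ _ _ hP hQ hab) /= -!exprnP.
rewrite /horadam (binet_bwd _ _ _ hP hQ hab ha hb) /=.
by rewrite !exprVn.
Qed.

Lemma lin1 (F : fieldType) (w : int -> F) (al be A B : F) (f : nat -> F) (g : nat -> int) n :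
  (forall k, w k = A * al ^ k + B * be ^ k) ->
  \sum_(0 <= j < n) f j * w (g j) =
  A * \sum_(0 <= j < n) f j * al ^ (g j) + B * \sum_(0 <= j < n) f j * be ^ (g j).
Proof.
move=> hw; rewrite !mulr_sumr -big_split; apply: eq_bigr => j _ /=; rewrite hw; ring.
Qed.

Lemma lin2 (F : fieldType) (w : int -> F) (al be A B : F) (f f1 f2 : nat -> F) (g1 g2 : nat -> int) n :
  (forall k, w k = A * al ^ k + B * be ^ k) ->
  \sum_(0 <= j < n) f j * (f1 j * w (g1 j) + f2 j * w (g2 j)) =
  A * \sum_(0 <= j < n) f j * (f1 j * al ^ (g1 j) + f2 j * al ^ (g2 j))
  + B * \sum_(0 <= j < n) f j * (f1 j * be ^ (g1 j) + f2 j * be ^ (g2 j)).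
Proof.
move=> hw; rewrite !mulr_sumr -big_split; apply: eq_bigr => j _ /=; rewrite !hw; ring.
Qed.

Theorem theorem14 (p q : Rl) (a b : Cx) (m r s t : int) (n : nat) :
  p != 0 -> q != 0 -> 0 < p ^+ 2 - 4 * q ->
  let w := horadam a b p q in
  let u := hu p q in
  let v := hv p q in
  let Q : Cx := q%:C in
  let X := Q ^ m * u (r - s) ^+ 2 + Q ^ (2 * m - s) * u (r - m) ^+ 2
           + Q ^ m * u (r - s) * u (r - m) * v (m - s) in
  X != 0 ->
  (\sum_(0 <= j < n.+1)
      (-1) ^+ j * Q ^ ((m - s) * j%:Z) * u (r - s) ^+ (n - j) * u (r - m) ^+ j
        * w ((s - m) * j%:Z + m * n%:Z + t)
   = \sum_(0 <= j < n.+1)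
      u (m - s) ^+ j / 2 ^+ j.+1 *
        (u (r - s) ^+ (n - j) * w ((r - m) * j%:Z + m * n%:Z + t)
         + (-1) ^+ (n - j) * Q ^ ((m - s) * (n - j)%:Z) * u (r - m) ^+ (n - j)
             * w (s * (n - j)%:Z + t + r * j%:Z)))
  /\
  (\sum_(0 <= j < n.+1)
      u (m - s) ^+ j / 2 ^+ j.+1 *
        (u (r - s) ^+ (n - j) * w ((r - m) * j%:Z + m * n%:Z + t)
         + (-1) ^+ (n - j) * Q ^ ((m - s) * (n - j)%:Z) * u (r - m) ^+ (n - j)
             * w (s * (n - j)%:Z + t + r * j%:Z))
   = (u (r - s) ^+ n.+2 * w (m * n%:Z + t)
        + u (r - s) ^+ n.+1 * u (r - m) * w (m * n%:Z + m + t - s))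
       / (u (r - s) ^+ 2 + Q ^ (m - s) * u (r - m) ^+ 2
          + u (r - s) * u (r - m) * v (m - s))
     + (-1) ^+ n * u (r - m) ^+ n.+1
         * (Q ^ ((m - s) * (n%:Z + 1) + m) * u (r - s) * w (s * n%:Z + s + t - m)
            + Q ^ ((m - s) * (n%:Z + 2) + s) * u (r - m) * w (s * n%:Z + t))
         / X).
Proof.
move=> hp hq hd w u v Q X hX.
have [al [be [ha hb hab hP hQ]]] := roots_ex hq hd.
have hba : be != al by rewrite eq_sym.
have hab' : al - be != 0 by rewrite subr_eq0.
have hba' : be - al != 0 by rewrite subr_eq0.
have hw k : w k = (b - a * be) / (al - be) * al ^ k + (a * al - b) / (al - be) * be ^ k.
  exact: binet.
have hu k : u k = (al ^ k - be ^ k) / (al - be).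
  rewrite /u /hu (binet _ _ _ hP hQ hab ha hb); field; done.
have hu' k : u k = (be ^ k - al ^ k) / (be - al).
  rewrite hu; field; by rewrite hab' hba'.
have hv k : v k = al ^ k + be ^ k.
  rewrite /v /hv (binet _ _ _ hP hQ hab ha hb) -hP; field; done.
have hv' k : v k = be ^ k + al ^ k by rewrite hv addrC.
have hQa : Q = al * be by rewrite hQ.
have hQb : Q = be * al by rewrite mulrC hQ.
have h2 : (2 : Cx) != 0 by rewrite pnatr_eq0.
have [L1a M1a] := @core1 _ al be u Q m r s t n h2 ha hb hab hu hQa.
have [L1b M1b] := @core1 _ be al u Q m r s t n h2 hb ha hba hu' hQb.
have R2a := @core2 _ al be u v Q m r s t n h2 ha hb hab hv hQa hX.
have R2b := @core2 _ be al u v Q m r s t n h2 hb ha hba hv' hQb hX.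
split.
  by rewrite (lin1 _ _ _ hw) (lin2 _ _ _ _ _ _ hw) L1a L1b M1a M1b.
rewrite (lin2 _ _ _ _ _ _ hw) M1a M1b -R2a -R2b !hw.
rewrite /X; clearbody w u v Q.
move: ((b - a * be) / (al - be)) ((a * al - b) / (al - be)) => A B.
ring.
Qed.
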